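(* Define polynomials $P_k(x)\in\mathbb{Q}[x]$ by $P_0(x):=0$, $P_1(x):=1$, and for $k\ge2$ $$P_k(x):=-\frac{1}{(2k-1)(k-1)}\sum_{i=1}^{k-1}\left(6x\binom{2k}{2i}(2^{2i-1}-1)+\binom{2k}{2i+2}(2^{2i+1}-1)-2^{2i}\binom{2k}{2i+1}+\binom{2k}{2i}\right)P_{k-i}(x).$$ Then for $k\ge2$ we have the recurrence $$P_k(x)=(1-12x)P_{k-1}(x)-36x^2P_{k-2}(x),$$ and the explicit formula $$P_k(x)=2^{1-2k}\sum_{j=0}^{k-1}\binom{2k}{2j+1}(1-24x)^j=\frac{1}{\sqrt{1-24x}}\left(\left(\frac{1+\sqrt{1-24x}}{2}\right)^{2k}-\left(\frac{1-\sqrt{1-24x}}{2}\right)^{2k}\right).$$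
   Context: These are the polynomials $P_k$ for which the rank moment generating functions satisfy $\mathcal{R}_{2k}=P_k(\delta_q)\mathcal{R}_2+(\text{terms built from crank moments})$, where $\delta_q=q\frac{d}{dq}$; the defining recursion above is the one induced on the coefficient of $\mathcal{R}_2$. In the last expression any fixed branch of the square root may be taken. *)

(* Defs.v *)
From HB Require Import structures.
From mathcomp Require Import all_boot all_order all_algebra.
Set Implicit Arguments. Unset Strict Implicit. Unset Printing Implicit Defensive.
Import Order.TTheory GRing.Theory Num.Theory.
Local Open Scope ring_scope.

Definition Pcoef (k i : nat) : {poly rat} :=
  (6%:R * ('C(2*k, 2*i)%:R * ((2:rat) ^+ (2*i).-1 - 1)))%:P * 'X
  + ('C(2*k, (2*i).+2)%:R * ((2:rat) ^+ (2*i).+1 - 1)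
     - (2:rat) ^+ (2*i) * 'C(2*k, (2*i).+1)%:R
     + 'C(2*k, 2*i)%:R)%:P.

(* Given the list s = [:: P_0; ...; P_{k-1}], compute P_k (k >= 1). *)
Definition Pnext (k : nat) (s : seq {poly rat}) : {poly rat} :=
  if k == 1%N then 1 else
  (- (((2*k-1)*(k-1))%:R : rat)^-1)%:P *
    \sum_(1 <= i < k) Pcoef k i * nth 0 s (k - i).

Fixpoint Plist (n : nat) : seq {poly rat} :=
  match n with
  | 0 => [:: 0]
  | n'.+1 => let s := Plist n' in rcons s (Pnext n'.+1 s)
  end.

Definition P (k : nat) : {poly rat} := nth 0 (Plist k) k.

(* Main.v *)
Require Import Defs.
From HB Require Import structures.
From mathcomp Require Import all_boot all_order all_algebra.
From mathcomp Require Import ring lra zify.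
Import Order.TTheory GRing.Theory Num.Theory.
Local Open Scope ring_scope.

Lemma sum_split (R : nmodType) n (F : nat -> R) :
  \sum_(i < (2*n).+1) F i = \sum_(i < n.+1) F (2*i)%N + \sum_(i < n) F (2*i).+1.
Proof.
elim: n => [|n IH]; first by rewrite !big_ord_recr !big_ord0 /= !add0r addr0.
rewrite (_ : (2 * n.+1).+1 = (2*n).+3)%N; last by rewrite mulnS.
rewrite [LHS]big_ord_recr /= (big_ord_recr (2*n).+1) /= IH.
rewrite (big_ord_recr n.+1 (fun i => F (2*i)%N)) (big_ord_recr n (fun i => F (2*i).+1)) /=.
rewrite (_ : (2 * n.+1 = (2*n).+2)%N); last by rewrite mulnS.
rewrite -!addrA; congr (_ + _); rewrite [RHS]addrCA; congr (_ + _); exact: addrC.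
Qed.

Lemma neg_even (R : ringType) (x : R) i : (-x)^+(2*i) = x^+(2*i).
Proof. by rewrite !exprM sqrrN. Qed.
Lemma neg_odd (R : ringType) (x : R) i : (-x)^+(2*i).+1 = -(x^+(2*i).+1).
Proof. by rewrite !exprS neg_even mulNr. Qed.

Lemma binE (R : comRingType) (u v : R) n :
  (v+u)^+(2*n) + (v-u)^+(2*n) =
  2%:R * \sum_(i < n.+1) 'C(2*n,2*i)%:R * u^+(2*i) * v^+(2*n-2*i).
Proof.
rewrite !exprDn -big_split /=.
rewrite (@sum_split _ n (fun i => v ^+ (2*n-i) * u^+i *+ 'C(2*n,i) + v^+(2*n-i)*(-u)^+i *+ 'C(2*n,i))).
rewrite [X in _ + X](eq_bigr (fun _ => 0)); last first.
  move=> i _; by rewrite neg_odd mulrN mulNrn addrN.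
rewrite big1_eq addr0 big_distrr /=; apply: eq_bigr => i _.
rewrite neg_even; move: (v ^+ _) (u ^+ _) ('C(_,_)) => A B c; ring.
Qed.

Lemma binO (R : comRingType) (u v : R) n :
  (v+u)^+(2*n) - (v-u)^+(2*n) =
  2%:R * \sum_(i < n) 'C(2*n,(2*i).+1)%:R * u^+(2*i).+1 * v^+(2*n-(2*i).+1).
Proof.
rewrite !exprDn -sumrB /=.
rewrite (@sum_split _ n (fun i => v ^+ (2*n-i) * u^+i *+ 'C(2*n,i) - v^+(2*n-i)*(-u)^+i *+ 'C(2*n,i))).
rewrite [X in X + _](eq_bigr (fun _ => 0)); last first.
  move=> i _; by rewrite neg_even addrN.
rewrite big1_eq add0r big_distrr /=; apply: eq_bigr => i _.
rewrite neg_odd; move: (v ^+ _) (u ^+ _) ('C(_,_)) => A B c; ring.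
Qed.

Definition Q (k : nat) : {poly rat} := (((2:rat) ^+ (2*k).-1)^-1)%:P *
          \sum_(j < k) 'C(2*k, (2*j).+1)%:R *: (1 - 24%:R *: 'X) ^+ j.

Lemma Qeval (F : numFieldType) (x s : F) k : s ^+ 2 = 1 - 24%:R * x ->
  s * (map_poly (@ratr F) (Q k)).[x] = ((1 + s) / 2%:R) ^+ (2*k) - ((1 - s) / 2%:R) ^+ (2*k).
Proof.
move=> hs.
rewrite /Q rmorphM /= map_polyC rmorph_sum /= hornerM hornerC horner_sum.
under eq_bigr => i _ do rewrite map_polyZ /= rmorphXn rmorphB /= rmorph1 map_polyZ map_polyX /= !hornerE /=.
rewrite fmorphV rmorphXn /= ratr_nat.
under eq_bigr do rewrite !ratr_nat -hs -exprM.
rewrite !expr_div_n -mulrBl binO.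
under [X in _ = _ * X / _]eq_bigr do rewrite expr1n mulr1.
rewrite mulrCA big_distrr /=.
under eq_bigr do rewrite mulrCA -exprS.
case: k => [|n]; first by rewrite !big_ord0 !mulr0 mul0r.
rewrite (_ : (2 * n.+1).-1 = (2*n).+1)%N; last by rewrite mulnS.
rewrite (_ : (2 * n.+1) = (2*n).+2)%N; last by rewrite mulnS.
rewrite (exprS _ (2*n).+1); move: (\sum_(i < _) _) => S.
have h2 : (2:F) != 0 by rewrite pnatr_eq0.
by field; rewrite ?h2 ?expf_neq0.
Qed.


Definition ee k (a u : rat) i := 'C(2*k,2*i)%:R * u^+(2*i) * a^+(2*k-2*i).
Definition ss k (a u : rat) i := 'C(2*k,(2*i).+2)%:R * u^+(2*i).+2 * a^+(2*(k-i)).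
Definition oo k (a u : rat) i := 'C(2*k,(2*i).+1)%:R * u^+(2*i).+1 * a^+(2*k-(2*i).+1).

Lemma fullE k a u : \sum_(0 <= i < k.+1) ee k a u i = ((a+u)^+(2*k) + (a-u)^+(2*k))/2.
Proof.
rewrite binE big_mkord mulrC mulrA mulVf ?mul1r //.
Qed.

Lemma sumE k a u : (1 <= k)%N ->
  \sum_(1 <= i < k) ee k a u i = ((a+u)^+(2*k) + (a-u)^+(2*k))/2 - a^+(2*k) - u^+(2*k).
Proof.
move=> hk; rewrite -fullE (@big_ltn _ _ _ 0 k.+1) // (@big_nat_recr _ _ _ k 1) //=.
rewrite /ee muln0 bin0 subn0 subnn expr0 binn !mulr1 mul1r.
by move: (\sum_(_ <= _ < _) _) (a^+(2*k)) (u^+(2*k)) => S A U; ring.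
Qed.

Lemma sumS k a u : (1 <= k)%N ->
  \sum_(1 <= i < k) ss k a u i = a^+2 * (((a+u)^+(2*k) + (a-u)^+(2*k))/2 - a^+(2*k)
     - 'C(2*k,2)%:R * u^+2 * a^+(2*k-2)).
Proof.
move=> hk; rewrite -fullE (@big_ltn _ _ _ 0 k.+1) // (@big_ltn _ _ _ 1 k.+1) //=.
rewrite (big_add1 _ _ 1) /=.
have -> : \sum_(1<=i<k) ss k a u i = a^+2 * \sum_(1<=i<k) ee k a u i.+1.
  rewrite mulr_sumr; apply: eq_big_nat => i /andP [h1 h2].
  rewrite /ss /ee mulnS !add2n (_ : (2 * k - (2 * i).+2 = 2 * (k - i.+1))%N); last by lia.
  rewrite (_ : (2 * (k - i) = (2 * (k - i.+1)).+2)%N); last by lia.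
  rewrite -[(2*(k-i.+1)).+2]addn2 exprD.
  by move: (a^+(2*(k-i.+1))) (u^+(2*i).+2) ('C(_,_)%:R) => A U C; ring.
rewrite /ee muln0 bin0 subn0 expr0 !mulr1 mul1r muln1.
by move: (\sum_(_ <= _ < _) _) (a^+(2*k)) ('C(2*k,2)%:R * u^+2 * a^+(2*k-2)) => S A B; ring.
Qed.

Lemma fullO k a u : \sum_(0 <= i < k) oo k a u i = ((a+u)^+(2*k) - (a-u)^+(2*k))/2.
Proof.
rewrite binO big_mkord mulrC mulrA mulVf ?mul1r //.
Qed.

Lemma sumO k a u : (1 <= k)%N ->
  \sum_(1 <= i < k) oo k a u i = ((a+u)^+(2*k) - (a-u)^+(2*k))/2 - (2*k)%:R * u * a^+(2*k).-1.
Proof.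
move=> hk; rewrite -fullO (@big_ltn _ _ _ 0 k _ hk) /oo muln0 bin1 expr1 subn1.
by rewrite addrAC subrr add0r.
Qed.

Definition cc k i (y:rat) := y * ('C(2*k,2*i)%:R * (2^+(2*i).-1 - 1)) +
  ('C(2*k,(2*i).+2)%:R * (2^+(2*i).+1 - 1) - 2^+(2*i) * 'C(2*k,(2*i).+1)%:R + 'C(2*k,2*i)%:R).

Lemma pt k i a y : (1 <= i < k)%N -> cc k i y * a^+(2*(k-i)) =
  y*(ee k a 2 i/2 - ee k a 1 i) + ss k a 2 i/2 - ss k a 1 i - a * oo k a 2 i / 2 + ee k a 1 i.
Proof.
case/andP=> h1 h2.
have e1 : (2:rat)^+(2*i) = 2 * 2^+(2*i).-1 by rewrite -exprS prednK //; lia.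
have e2 : a^+(2*(k-i)) = a * a^+(2*k-(2*i).+1) by rewrite -exprS; congr (_ ^+ _); lia.
have e3 : a^+(2*k-2*i) = a * a^+(2*k-(2*i).+1) by rewrite -exprS; congr (_ ^+ _); lia.
rewrite /cc /ee /ss /oo !expr1n e2 e3 !exprS e1.
by move: (2^+(2*i).-1) (a^+(2*k-(2*i).+1)) ('C(2*k,2*i)%:R) ('C(2*k,(2*i).+1)%:R) ('C(2*k,(2*i).+2)%:R) => T A C0 C1 C2; field.
Qed.

Lemma fsum k a y : (1 <= k)%N -> \sum_(1<=i<k) cc k i y * a^+(2*(k-i)) =
 y*( (((a+2)^+(2*k) + (a-2)^+(2*k))/2 - a^+(2*k) - 2^+(2*k))/2 - (((a+1)^+(2*k) + (a-1)^+(2*k))/2 - a^+(2*k) - 1^+(2*k)) )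
 + (a^+2 * (((a+2)^+(2*k) + (a-2)^+(2*k))/2 - a^+(2*k) - 'C(2*k,2)%:R * 2^+2 * a^+(2*k-2)))/2
 - a^+2 * (((a+1)^+(2*k) + (a-1)^+(2*k))/2 - a^+(2*k) - 'C(2*k,2)%:R * 1^+2 * a^+(2*k-2))
 - a * (((a+2)^+(2*k) - (a-2)^+(2*k))/2 - (2*k)%:R * 2 * a^+(2*k).-1) / 2
 + (((a+1)^+(2*k) + (a-1)^+(2*k))/2 - a^+(2*k) - 1^+(2*k)).
Proof.
move=> hk; rewrite (eq_big_nat _ _ (fun i hi => @pt k i a y hi)).
rewrite !big_split /= !sumrN -mulr_sumr big_split /= sumrN -!mulr_suml -mulr_sumr.
by rewrite !sumE // !sumS // sumO.
Qed.

Lemma binC2 m : 'C( (2* m).+2, 2) = (m.+1 * (2* m).+1)%N.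
Proof. rewrite bin2 -divn2 /=; lia. Qed.

Lemma mainid m a : (1 <= m)%N ->
 \sum_(1<=i<m.+1) cc m.+1 i (a*(1-a)) * (a^+(2*(m.+1-i)) - (1-a)^+(2*(m.+1-i)))
  + (((2* m.+1).-1 * m)%:R) * (a^+(2* m.+1) - (1-a)^+(2* m.+1)) = 0.
Proof.
move=> hm.
under eq_big_nat => i hi do rewrite mulrBr.
rewrite sumrB !fsum //.
have h1 : a - 1 = -(1-a) by ring.
have h2 : a - 2 = -((1-a)+1) by ring.
have h3 : 1 - a - 1 = - a by ring.
have h4 : 1 - a - 2 = -(a+1) by ring.
rewrite h1 h2 h3 h4 !neg_even !expr1n.
rewrite (_ : (2* m.+1 - 2 = 2* m)%N); last by lia.
rewrite (_ : ((2* m.+1).-1 = (2* m).+1)%N); last by lia.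
rewrite (_ : (2* m.+1 = (2* m).+2)%N); last by lia.
rewrite binC2 !exprS.
rewrite !expr0 !natrM -!natr1 !natrM.
move: (a^+(2 * m)) ((1-a)^+(2 * m)) ((a+2)^+(2 * m)) ((1-a+2)^+(2 * m)) ((a+1)^+(2 * m)) ((1-a+1)^+(2 * m)) (2^+(2 * m)) (m%:R) => A B X1 X2 Y1 Y2 T M.
by field.
Qed.

Lemma size_Plist n : size (Plist n) = n.+1.
Proof. by elim: n => [|n IH] //=; rewrite size_rcons IH. Qed.

Lemma nth_Plist n i : (i <= n)%N -> nth 0 (Plist n) i = P i.
Proof.
elim: n => [|n IH]; first by rewrite leqn0 => /eqP ->.
rewrite leq_eqVlt => /orP [/eqP -> // | hi].
by rewrite /= nth_rcons size_Plist hi IH.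
Qed.

Lemma P_succ n : P n.+1 = Pnext n.+1 (Plist n).
Proof. by rewrite /P /= nth_rcons size_Plist ltnn eqxx. Qed.

Lemma ratr_id (x : rat) : ratr x = x.
Proof. by rewrite /ratr divq_num_den. Qed.

Lemma map_ratr_id (p : {poly rat}) : map_poly (@ratr rat) p = p.
Proof. by apply: map_poly_id => y _; rewrite ratr_id. Qed.

Definition pt_ (n : nat) : rat := (1 - (n.+1)%:R ^+ 2) / 24%:R.

Lemma poly_zero_pts (p : {poly rat}) : (forall n, p.[pt_ n] = 0) -> p = 0.
Proof.
move=> hp; case: (eqVneq p 0) => // hp0; exfalso.
have Hall : all (root p) [seq pt_ n | n <- iota 0 (size p)].
  by apply/allP => y /mapP [n _ ->]; apply/rootP.
have Hu : uniq [seq pt_ n | n <- iota 0 (size p)].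
  rewrite map_inj_uniq ?iota_uniq // => u v; rewrite /pt_ => h.
have : ((u.+1)%:R ^+ 2 : rat) = (v.+1)%:R ^+ 2.
  by move: h; move: ((u.+1)%:R ^+ 2 : rat) ((v.+1)%:R ^+ 2 : rat) => U V; lra.
by rewrite -!natrX => /eqP; rewrite eqr_nat eqn_sqr => /eqP [].
have := max_poly_roots hp0 Hall Hu.
by rewrite size_map size_iota ltnn.
Qed.

Lemma Qr k (s : rat) : s * (Q k).[(1 - s^+2)/24%:R] = ((1+s)/2)^+(2*k) - (1 - (1+s)/2)^+(2*k).
Proof.
have := @Qeval rat ((1 - s^+2)/24%:R) s k; rewrite map_ratr_id => ->; last by field.
by congr (_ - _ ^+ _); field.
Qed.

Lemma Pcoef_ev k i (s : rat) : (Pcoef k i).[(1 - s^+2)/24%:R] = cc k i ((1+s)/2 * (1 - (1+s)/2)).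
Proof.
rewrite /Pcoef /cc !hornerE /=.
move: ('C(2*k,2*i)%:R : rat) ('C(2*k,(2*i).+1)%:R : rat) ('C(2*k,(2*i).+2)%:R : rat) ((2:rat)^+(2*i).-1) ((2:rat)^+(2*i)) ((2:rat)^+(2*i).+1) => c0 c1 c2 t0 t1 t2.
by field.
Qed.

Lemma QI m : (1 <= m)%N ->
  \sum_(1<=i<m.+1) Pcoef m.+1 i * Q (m.+1 - i) + (((2* m.+1).-1* m)%:R)%:P * Q m.+1 = 0.
Proof.
move=> hm; apply: poly_zero_pts => n.
have hs : ((n.+1)%:R : rat) != 0 by rewrite pnatr_eq0.
apply: (mulfI hs); rewrite mulr0 /pt_.
move: ((n.+1)%:R : rat) hs => s hs.
rewrite hornerD horner_sum hornerM hornerC mulrDr mulr_sumr.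
under eq_bigr => i _ do rewrite hornerM mulrCA Qr Pcoef_ev.
by rewrite mulrCA Qr; apply: mainid.
Qed.

Lemma PQ k : P k = Q k.
Proof.
elim/ltn_ind: k => -[|[|m]] IH.
- by rewrite /P /Q /= big_ord0 mulr0.
- rewrite /P /= /Pnext /= /Q big_ord1 /= expr1 bin1. 
  by rewrite muln1 expr0 alg_polyC -polyCM mulVf.
- rewrite P_succ /Pnext /=.
  have -> : \sum_(1 <= i < m.+2) Pcoef m.+2 i * nth 0 (Plist m.+1) (m.+2 - i)
          = \sum_(1 <= i < m.+2) Pcoef m.+2 i * Q (m.+2 - i).
    apply: eq_big_nat => i /andP [h1 h2].
    rewrite nth_Plist ?IH //; lia.
  have := @QI m.+1 isT; move/eqP; rewrite addr_eq0 => /eqP ->.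
  rewrite (_ : ((2 * m.+2 - 1) * (m.+2 - 1))%N = ((2 * m.+2).-1 * m.+1)%N); last by lia.
  rewrite mulrN polyCN mulNr opprK mulrA -polyCM mulVf ?polyC1 ?mul1r //.
  by rewrite pnatr_eq0 -lt0n; lia.
Qed.

Lemma hornrec (q0 q1 q2 : {poly rat}) x :
  (q2 - ((1 - 12%:R *: 'X) * q1 - 36%:R *: 'X ^+ 2 * q0)).[x] =
  q2.[x] - ((1 - 12%:R * x) * q1.[x] - 36%:R * (x * x) * q0.[x]).
Proof. by rewrite !(hornerD, hornerN, hornerM, hornerZ, hornerX, hornerC, hornerXn, expr2). Qed.

Lemma Qrec m : Q m.+2 = (1 - 12%:R *: 'X) * Q m.+1 - 36%:R *: 'X ^+ 2 * Q m.
Proof.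
apply/eqP; rewrite -subr_eq0; apply/eqP; apply: poly_zero_pts => n.
have hs : ((n.+1)%:R : rat) != 0 by rewrite pnatr_eq0.
apply: (mulfI hs); rewrite mulr0 /pt_.
move: ((n.+1)%:R : rat) hs => s hs.
rewrite hornrec.
have := Qr m.+2 s; have := Qr m.+1 s; have := Qr m s.
move: (Q m.+2).[_] (Q m.+1).[_] (Q m).[_] => q2 q1 q0.
rewrite (_ : (2 * m.+2 = (2 * m).+4)%N); last by lia.
rewrite (_ : (2 * m.+1 = (2 * m).+2)%N); last by lia.
rewrite !exprS.
move: (((1+s)/2) ^+ (2 * m)) ((1 - (1+s)/2) ^+ (2 * m)) => A B h0 h1 h2.
apply: (@eq_trans _ _ (s*q2 - ((1 - 12%:R * ((1 - s*s)/24%:R)) * (s*q1) - 36%:R * ((1 - s*s)/24%:R * ((1 - s*s)/24%:R)) * (s*q0)))).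
  by rewrite expr0 mulr1; field.
rewrite h0 h1 h2; by field.
Qed.
Theorem proposition7p1 (k : nat) (hk : (2 <= k)%N) :
  P k = (1 - 12%:R *: 'X) * P k.-1 - 36%:R *: 'X ^+ 2 * P k.-2 /\
  P k = (((2:rat) ^+ (2*k).-1)^-1)%:P *
          \sum_(j < k) 'C(2*k, (2*j).+1)%:R *: (1 - 24%:R *: 'X) ^+ j /\
  (forall (F : numFieldType) (x s : F), s ^+ 2 = 1 - 24%:R * x -> s != 0 ->
     (map_poly (@ratr F) (P k)).[x] =
       s^-1 * (((1 + s) / 2%:R) ^+ (2*k) - ((1 - s) / 2%:R) ^+ (2*k))).
Proof.
split; last split.
- case: k hk => [|[|m]] // _; by rewrite /= !PQ Qrec.
- by rewrite PQ.
- move=> F x s hx hs; by rewrite -(@Qeval F x s k hx) PQ mulrA mulVf ?mul1r.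
Qed.
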